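(* Let $H$ be Higman's group, $H=\langle a_i\ (i\in\mathbb Z/4\mathbb Z)\mid a_i a_{i+1} a_i^{-1}=a_{i+1}^2 \text{ for all } i\in \mathbb Z/4\mathbb Z\rangle$, and let $\psi:H\to\mathsf{Homeo}(\mathbb R)$ be a non-trivial homomorphism such that $\psi(H)$ has no global fixed point in $\mathbb R$. Then there is a subgroup $B\le H$ isomorphic to the Baumslag–Solitar group $\mathsf{BS}(1,2)=\langle\alpha,\beta\mid \alpha\beta\alpha^{-1}=\beta^2\rangle$ such that the restriction of $\psi$ to $B$ is injective, $\psi(B)$ preserves a compact interval $I\subset\mathbb R$, and the action of $\psi(B)$ restricted to $I$ is not semi-conjugate to the standard affine action of $\mathsf{BS}(1,2)$.
   Context: The standard affine action of $\mathsf{BS}(1,2)=\langle\alpha,\beta\mid \alpha\beta\alpha^{-1}=\beta^2\rangle$ on $\mathbb R$ is given by $\alpha: x\mapsto 2x$, $\beta:x\mapsto x+1$. Two actions $\psi_1:G\to\mathsf{Homeo}_+(J_1)$, $\psi_2:G\to\mathsf{Homeo}_+(J_2)$ on open intervals (each identified with $\mathbb R$) are semi-conjugate if there is a proper, non-decreasing map $h:J_1\to J_2$ with $h\circ\psi_1(g)=\psi_2(g)\circ h$ for all $g\in G$; for the action of $\psi(B)$ on the compact interval $I$ this refers to its action on the interior of $I$. *)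

(* Defs.v *)
From Stdlib Require Import Reals List Bool.
Open Scope R_scope.
Import ListNotations.

(** * Finitely presented groups, as quotients of the free monoid on
    letters (g, inverted?) by the congruence generated by free cancellation
    and the defining relations. *)

Definition word (G : Type) := list (G * bool).  (* (g,false)=g, (g,true)=g^-1 *)

Definition winv {G} (w : word G) : word G :=
  rev (map (fun p => (fst p, negb (snd p))) w).

Inductive peq {G : Type} (rels : word G * word G -> Prop) : word G -> word G -> Prop :=
| peq_refl : forall w, peq rels w w
| peq_sym : forall w1 w2, peq rels w1 w2 -> peq rels w2 w1
| peq_trans : forall w1 w2 w3, peq rels w1 w2 -> peq rels w2 w3 -> peq rels w1 w3
| peq_cancel : forall u v g b,
    peq rels (u ++ (g, b) :: (g, negb b) :: v) (u ++ v)
| peq_rel : forall u v l r, rels (l, r) -> peq rels (u ++ l ++ v) (u ++ r ++ v).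

Inductive gen4 : Type := A0 | A1 | A2 | A3.
Definition next4 (i : gen4) : gen4 :=
  match i with A0 => A1 | A1 => A2 | A2 => A3 | A3 => A0 end.

Definition higman_rel (p : word gen4 * word gen4) : Prop :=
  exists i : gen4,
    p = ([(i, false); (next4 i, false); (i, true)],
         [(next4 i, false); (next4 i, false)]).

Inductive bsgen : Type := Alpha | Beta.

Definition bs_rel (p : word bsgen * word bsgen) : Prop :=
  p = ([(Alpha, false); (Beta, false); (Alpha, true)],
       [(Beta, false); (Beta, false)]).

Definition bs_subst (u v : word gen4) (w : word bsgen) : word gen4 :=
  flat_map (fun p => match p with
                     | (Alpha, false) => u
                     | (Alpha, true) => winv u
                     | (Beta, false) => v
                     | (Beta, true) => winv v
                     end) w.

Definition is_homeo_pair (f g : R -> R) : Prop :=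
  continuity f /\ continuity g /\ (forall x, f (g x) = x) /\ (forall x, g (f x) = x).

(** Action (on the left) of a word, given images of generators and of
    their inverses: the word g1 ... gn acts as g1 o ... o gn. *)
Fixpoint weval {G} (f finv : G -> R -> R) (w : word G) (x : R) : R :=
  match w with
  | [] => x
  | (g, b) :: w' => (if b then finv g else f g) (weval f finv w' x)
  end.

Definition std_f (g : bsgen) (x : R) : R :=
  match g with Alpha => 2 * x | Beta => x + 1 end.
Definition std_finv (g : bsgen) (x : R) : R :=
  match g with Alpha => x / 2 | Beta => x - 1 end.

Definition proper_on (a b : R) (h : R -> R) : Prop :=
  forall K : R -> Prop, compact K -> compact (fun x => a < x < b /\ K (h x)).

Definition semiconj_to_std (a b : R) (act : word bsgen -> R -> R) : Prop :=
  exists h : R -> R,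
    proper_on a b h /\
    (forall x y, a < x -> x <= y -> y < b -> h x <= h y) /\
    (forall w x, a < x < b -> h (act w x) = weval std_f std_finv w (h x)).

(* Main.v *)
Require Import Defs.
From Stdlib Require Import Reals List Lra Lia Classical.
Open Scope R_scope.
Import ListNotations.

Definition incr (g : R -> R) := forall x y, x < y -> g x < g y.

Fixpoint itr (g : R -> R) (n : nat) (x : R) : R :=
  match n with O => x | S n => g (itr g n x) end.

Lemma incr_le g : incr g -> forall x y, x <= y -> g x <= g y.
Proof. intros H x y Hxy. destruct (Rle_lt_or_eq_dec x y Hxy) as [h|h].
  left; auto. subst; lra. Qed.

Lemma incr_inj g : incr g -> forall x y, g x = g y -> x = y.
Proof. intros H x y E. destruct (Rtotal_order x y) as [h|[h|h]]; auto.
  apply H in h; lra. apply H in h; lra. Qed.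

Lemma incr_inv g ginv : incr g -> (forall x, g (ginv x) = x) -> incr ginv.
Proof. intros H Hi x y Hxy. destruct (Rlt_or_le (ginv x) (ginv y)) as [h|h]; auto.
  apply (incr_le g H) in h. rewrite !Hi in h. lra. Qed.

Lemma itr_S' g n x : itr g (S n) x = itr g n (g x).
Proof. induction n; simpl; auto. simpl in IHn. rewrite IHn. auto. Qed.

Lemma itr_add g a b x : itr g (a + b) x = itr g a (itr g b x).
Proof. induction a; simpl; auto. rewrite IHa; auto. Qed.

Lemma itr_fix g x n : g x = x -> itr g n x = x.
Proof. intro H; induction n; simpl; auto. rewrite IHn; auto. Qed.

Lemma itr_cancel g h (H : forall x, g (h x) = x) n x : itr g n (itr h n x) = x.
Proof. induction n; simpl; auto.
  change (itr g (S n) (h (itr h n x)) = x). rewrite itr_S', H. exact IHn. Qed.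

Lemma cv_shift u l : Un_cv u l -> Un_cv (fun n => u (S n)) l.
Proof. intros H e He. destruct (H e He) as [N HN]. exists N. intros n Hn. apply HN. lia. Qed.

Lemma cv_const c : Un_cv (fun _ => c) c.
Proof. intros e He. exists O. intros. unfold R_dist. rewrite Rminus_diag, Rabs_R0. lra. Qed.

Lemma itr_up g x : incr g -> x < g x -> forall n, itr g n x < itr g (S n) x.
Proof. intros Hg Hx n. induction n; simpl in *; auto. Qed.

Lemma itr_up_mono g x : incr g -> x < g x -> forall m k, itr g m x < itr g (S k + m) x.
Proof. intros Hg Hx m k. induction k.
  - apply (itr_up g x Hg Hx m).
  - apply Rlt_trans with (1 := IHk). replace (S (S k) + m)%nat with (S (S k + m)) by lia.
    apply itr_up; auto. Qed.

Lemma itr_up_le g x : incr g -> x < g x -> forall m m', (m <= m')%nat -> itr g m x <= itr g m' x.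
Proof. intros Hg Hx m m' H. destruct (Nat.eq_dec m m'). subst; lra.
  replace m' with (S (m' - m - 1) + m)%nat by lia. left; apply itr_up_mono; auto. Qed.

Lemma itr_down g x : incr g -> g x < x -> forall n, itr g (S n) x < itr g n x.
Proof. intros Hg Hx n. induction n; simpl in *; auto. Qed.

Lemma itr_pres (g h : R -> R) x : (forall y, h y = y -> h (g y) = g y) -> h x = x ->
  forall n, h (itr g n x) = itr g n x.
Proof. intros H Hx n. induction n; simpl; auto. Qed.

Lemma lim_up (g : R -> R) x U : incr g -> continuity g -> x < g x ->
  (forall n, itr g n x <= U) ->
  exists L, g L = L /\ x < L /\ L <= U /\ (forall n, itr g n x <= L) /\
   (forall h, continuity h -> (forall n, h (itr g n x) = itr g n x) -> h L = L).
Proof.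
  intros Hg Hc Hx HU.
  assert (Gr : Un_growing (fun n => itr g n x)).
  { intro n. left. apply itr_up; auto. }
  destruct (growing_cv _ Gr) as [L HL].
  { exists U. intros r [i ->]. apply HU. }
  assert (Hle := growing_ineq _ _ Gr HL).
  exists L. split; [|split; [|split; [|split]]].
  - apply (UL_sequence (fun n => itr g (S n) x)).
    + apply (continuity_seq g (fun n => itr g n x)); auto.
    + apply (cv_shift (fun n => itr g n x)); auto.
  - specialize (Hle 1%nat). simpl in Hle. lra.
  - apply (Rle_cv_lim HU HL (cv_const U)).
  - exact Hle.
  - intros h Hh Hfix. symmetry. apply (UL_sequence (fun n => itr g n x)); auto.
    apply (Un_cv_ext (fun n => h (itr g n x))). intro; auto.
    apply continuity_seq; auto.
Qed.

Lemma lim_down (g : R -> R) x U : incr g -> continuity g -> g x < x ->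
  (forall n, U <= itr g n x) ->
  exists L, g L = L /\ L < x /\ U <= L /\ (forall n, L <= itr g n x) /\
   (forall h, continuity h -> (forall n, h (itr g n x) = itr g n x) -> h L = L).
Proof.
  intros Hg Hc Hx HU.
  assert (Gr : Un_decreasing (fun n => itr g n x)).
  { intro n. left. apply itr_down; auto. }
  destruct (decreasing_cv _ Gr) as [L HL].
  { exists (-U). intros r [i ->]. unfold opp_seq. specialize (HU i). lra. }
  assert (Hle := decreasing_ineq _ _ Gr HL).
  exists L. split; [|split; [|split; [|split]]].
  - apply (UL_sequence (fun n => itr g (S n) x)).
    + apply (continuity_seq g (fun n => itr g n x)); auto.
    + apply (cv_shift (fun n => itr g n x)); auto.
  - specialize (Hle 1%nat). simpl in Hle. lra.
  - apply (Rle_cv_lim HU (cv_const U) HL).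
  - exact Hle.
  - intros h Hh Hfix. symmetry. apply (UL_sequence (fun n => itr g n x)); auto.
    apply (Un_cv_ext (fun n => h (itr g n x))). intro; auto.
    apply continuity_seq; auto.
Qed.

Lemma itr_incr g n : incr g -> incr (itr g n).
Proof. intros H; induction n; intros x y Hxy; simpl; auto. Qed.

Lemma itr_down_mono g x : incr g -> g x < x -> forall m k, itr g (S k + m) x < itr g m x.
Proof. intros Hg Hx m k. induction k.
  - apply (itr_down g x Hg Hx m).
  - apply Rlt_trans with (2 := IHk). replace (S (S k) + m)%nat with (S (S k + m)) by lia.
    apply itr_down; auto. Qed.

Lemma cont_id : continuity (fun t => t).
Proof. exact (derivable_continuous _ derivable_id). Qed.

Lemma C0 (al alinv b binv : R -> R) :
 incr al -> incr b -> continuity al -> continuity b -> continuity binv ->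
 (forall y, al (alinv y) = y) -> (forall y, alinv (al y) = y) ->
 (forall y, b (binv y) = y) -> (forall y, binv (b y) = y) ->
 (forall y, al (b y) = b (b (al y))) ->
 forall x0, (forall y, b y = y -> y < x0) -> x0 < b x0 ->
 (exists z, (forall y, b y = y -> y < z) /\ al z = z) /\
 (exists B', forall z, al z = z -> z < B').
Proof.
  intros Ial Ib Cal Cb Cbi Al1 Al2 B1 B2 Rel x0 Jx0 Hx0.
  set (J := fun x => forall y, b y = y -> y < x).
  assert (Ibi : incr binv) by (apply (incr_inv b binv Ib B1)).
  assert (Hb2 : forall z, b (b z) = z -> b z = z).
  { intros z E. destruct (Rtotal_order z (b z)) as [h|[h|h]]; auto.
    - pose proof (Ib _ _ h). lra.
    - pose proof (Ib _ _ h). lra. }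
  assert (FA : forall y, b y = y -> b (al y) = al y).
  { intros y E. apply Hb2. rewrite <- Rel, E. auto. }
  assert (FAi : forall y, b y = y -> b (alinv y) = alinv y).
  { intros y E. apply (incr_inj al Ial). rewrite Rel, Al1, E. auto. }
  assert (Jup : forall x x', J x -> x <= x' -> J x').
  { intros x x' H1 H2 y Hy. specialize (H1 y Hy). lra. }
  assert (Jal : forall x, J x -> J (al x)).
  { intros x H y Hy. specialize (H _ (FAi y Hy)). apply Ial in H. rewrite Al1 in H. auto. }
  assert (Jbi : forall x, J x -> J (binv x)).
  { intros x H y Hy. specialize (H _ Hy). apply Ibi in H.
    replace (binv y) with y in H; auto. rewrite <- Hy at 2. rewrite B2. auto. }
  assert (RelI : forall y, al (binv y) = binv (binv (al y))).
  { intro y. rewrite <- (B1 y) at 2. rewrite Rel, !B2. auto. }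
  assert (ItA : forall n y, al (itr b n y) = itr b (2 * n) (al y)).
  { induction n; intro y; simpl; auto. rewrite Rel, IHn.
    replace (n + S (n + 0))%nat with (S (n + (n + 0))) by lia. simpl. auto. }
  assert (ItAi : forall n y, al (itr binv n y) = itr binv (2 * n) (al y)).
  { induction n; intro y; simpl; auto. rewrite RelI, IHn.
    replace (n + S (n + 0))%nat with (S (n + (n + 0))) by lia. simpl. auto. }
  assert (Hbx0 : binv x0 < x0).
  { pose proof (Ibi _ _ Hx0). rewrite B2 in H. auto. }
  assert (s1 : exists K, itr binv K x0 <= al x0).
  { destruct (classic (exists K, itr binv K x0 <= al x0)) as [h|Hn]; auto. exfalso.
    assert (HH : forall K, al x0 <= itr binv K x0).
    { intro K. destruct (Rle_or_lt (itr binv K x0) (al x0)) as [h|h].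
      exfalso; apply Hn; eauto. lra. }
    destruct (lim_down binv x0 (al x0) Ibi Cbi Hbx0 HH) as [L [HL1 [_ [HL3 _]]]].
    assert (bL : b L = L) by (rewrite <- HL1 at 1; rewrite B1; auto).
    assert (JL : J L) by (apply Jup with (al x0); auto).
    specialize (JL L bL). lra. }
  assert (s3 : forall z, exists N, z < itr b N x0).
  { intro z. destruct (classic (exists N, z < itr b N x0)) as [h|Hn]; auto. exfalso.
    assert (HH : forall N, itr b N x0 <= z).
    { intro N. destruct (Rle_or_lt (itr b N x0) z) as [h|h]; auto.
      exfalso; apply Hn; eauto. }
    destruct (lim_up b x0 z Ib Cb Hx0 HH) as [L [HL1 [HL2 _]]].
    specialize (Jx0 L HL1). lra. }
  assert (s2 : exists K', al x0 <= itr b K' x0).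
  { destruct (s3 (al x0)) as [N HN]. exists N. lra. }
  destruct s1 as [K HK]. destruct s2 as [K' HK'].
  assert (s4 : forall n, (K + 2 <= n)%nat -> itr b (S n) x0 < al (itr b n x0)).
  { intros n Hn. rewrite ItA.
    apply Rlt_le_trans with (itr b (2 * n) (itr binv K x0)).
    - replace (2 * n)%nat with ((2 * n - K) + K)%nat by lia.
      rewrite itr_add, itr_cancel; auto.
      replace (2 * n - K)%nat with (S (2 * n - K - S n - 1) + S n)%nat by lia.
      apply itr_up_mono; auto.
    - apply incr_le; auto. apply itr_incr; auto. }
  assert (s5 : forall N z, itr b (K + 2) x0 <= z -> z < itr b (K + 2 + N) x0 -> z < al z).
  { induction N; intros z H1 H2.
    - rewrite Nat.add_0_r in H2. lra.
    - destruct (Rlt_or_le z (itr b (K + 2 + N) x0)) as [h|h]; auto.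
      replace (K + 2 + S N)%nat with (S (K + 2 + N)) in H2 by lia.
      pose proof (s4 (K + 2 + N)%nat ltac:(lia)).
      pose proof (incr_le al Ial _ _ h). lra. }
  assert (s6 : forall z, itr b (K + 2) x0 <= z -> z < al z).
  { intros z Hz. destruct (s3 z) as [N HN]. apply (s5 N); auto.
    apply Rlt_le_trans with (1 := HN). apply itr_up_le; auto. lia. }
  split.
  2:{ exists (itr b (K + 2) x0). intros z Hz.
      destruct (Rlt_or_le z (itr b (K + 2) x0)) as [h|h]; auto.
      apply s6 in h. lra. }
  set (w := itr binv (S K') x0).
  assert (Jit : forall n, J (itr binv n x0)).
  { induction n; simpl; auto. }
  assert (Hw : al w < w).
  { unfold w. rewrite ItAi.
    apply Rle_lt_trans with (itr binv (2 * S K') (itr b K' x0)).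
    - apply incr_le; auto. apply itr_incr; auto.
    - replace (2 * S K')%nat with (S (S K') + K')%nat by lia.
      rewrite itr_add, itr_cancel; auto. apply itr_down; auto. }
  set (w' := itr b (K + 2) x0).
  assert (Hw' : w' < al w') by (apply s6; unfold w'; lra).
  assert (ww : w < w').
  { apply Rlt_trans with x0.
    - unfold w. pose proof (itr_down_mono binv x0 Ibi Hbx0 0 K') as h.
      rewrite Nat.add_0_r in h; exact h.
    - unfold w'. pose proof (itr_up_mono b x0 Ib Hx0 0 (K+1)) as h.
      replace (S (K + 1) + 0)%nat with (K + 2)%nat in h by lia. exact h. }
  destruct (IVT (fun t => al t - t) w w') as [z [[Hz1 Hz2] Hz]]; auto.
  - apply (continuity_minus al (fun t => t)); auto. apply cont_id.
  - lra.
  - lra.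
  - exists z. split.
    + apply Jup with w; auto. apply Jit.
    + lra.
Qed.

Record sys (f finv : gen4 -> R -> R) : Prop := mkSys {
 s_incr : forall i, incr (f i);
 s_cf : forall i, continuity (f i);
 s_cfi : forall i, continuity (finv i);
 s_inv1 : forall i x, f i (finv i x) = x;
 s_inv2 : forall i x, finv i (f i x) = x;
 s_rel : forall i x, f i (f (next4 i) x) = f (next4 i) (f (next4 i) (f i x)) }.

Lemma fixinv f finv (S : sys f finv) i y : f i y = y <-> finv i y = y.
Proof. split; intro E.
  - rewrite <- E at 1. apply s_inv2; auto.
  - rewrite <- E at 1. apply s_inv1; auto. Qed.

Lemma Cplus f finv (S : sys f finv) i :
  (exists B, forall y, f (next4 i) y = y -> y <= B) ->
  (exists z, f i z = z /\ forall y, f (next4 i) y = y -> y < z) /\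
  (exists B', forall z, f i z = z -> z <= B').
Proof.
  intros [B HB]. set (n := next4 i) in *.
  assert (J0 : forall y, f n y = y -> y < B + 1) by (intros y Hy; specialize (HB y Hy); lra).
  assert (Hn : f n (B + 1) <> B + 1) by (intro E; specialize (J0 _ E); lra).
  destruct (Rtotal_order (B+1) (f n (B+1))) as [h|[h|h]].
  - destruct (C0 (f i) (finv i) (f n) (finv n) (s_incr _ _ S i) (s_incr _ _ S n)
      (s_cf _ _ S i) (s_cf _ _ S n) (s_cfi _ _ S n) (s_inv1 _ _ S i) (s_inv2 _ _ S i)
      (s_inv1 _ _ S n) (s_inv2 _ _ S n) (s_rel _ _ S i) (B+1) J0 h)
      as [[z [Hz1 Hz2]] [B' HB']].
    split. exists z; auto. exists B'. intros z0 Hz0. left; auto.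
  - exfalso; auto.
  - assert (Ii : incr (finv n)) by (exact (incr_inv (f n) (finv n) (s_incr _ _ S n) (s_inv1 _ _ S n))).
    assert (RelI : forall y, f i (finv n y) = finv n (finv n (f i y))).
    { intro y. rewrite <- (s_inv1 _ _ S n y) at 2. rewrite (s_rel _ _ S i), !(s_inv2 _ _ S). auto. }
    assert (J1 : forall y, finv n y = y -> y < B + 1).
    { intros y Hy. apply J0. apply (fixinv f finv S). auto. }
    assert (h' : B + 1 < finv n (B + 1)).
    { pose proof (Ii _ _ h). rewrite (s_inv2 _ _ S) in H. auto. }
    destruct (C0 (f i) (finv i) (finv n) (f n) (s_incr _ _ S i) Ii
      (s_cf _ _ S i) (s_cfi _ _ S n) (s_cf _ _ S n) (s_inv1 _ _ S i) (s_inv2 _ _ S i)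
      (s_inv2 _ _ S n) (s_inv1 _ _ S n) RelI (B+1) J1 h')
      as [[z [Hz1 Hz2]] [B' HB']].
    split.
    + exists z; split; auto. intros y Hy. apply Hz1. apply (fixinv f finv S). auto.
    + exists B'. intros z0 Hz0. left; auto.
Qed.

Lemma unb_above f finv (S : sys f finv) : forall i B, exists x, B < x /\ f i x = x.
Proof.
  intros i B. apply NNPP. intro Hn.
  set (bd := fun k => exists B, forall y, f k y = y -> y <= B).
  assert (Hi : bd i).
  { exists B. intros y Hy. destruct (Rle_or_lt y B) as [h|h]; auto. exfalso; apply Hn; eauto. }
  assert (St : forall k, bd (next4 k) -> bd k) by (intros k H; apply (Cplus f finv S k H)).
  assert (All : bd Defs.A0 /\ bd Defs.A1 /\ bd Defs.A2 /\ bd Defs.A3).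
  { destruct i.
    - pose proof (St Defs.A3 Hi). pose proof (St Defs.A2 H). pose proof (St Defs.A1 H0). tauto.
    - pose proof (St Defs.A0 Hi). pose proof (St Defs.A3 H). pose proof (St Defs.A2 H0). tauto.
    - pose proof (St Defs.A1 Hi). pose proof (St Defs.A0 H). pose proof (St Defs.A3 H0). tauto.
    - pose proof (St Defs.A2 Hi). pose proof (St Defs.A1 H). pose proof (St Defs.A0 H0). tauto. }
  destruct All as [H0 [H1 [H2 H3]]].
  destruct (Cplus f finv S Defs.A0 H1) as [[z0 [E0 L0]] _].
  destruct (Cplus f finv S Defs.A1 H2) as [[z1 [E1 L1]] _].
  destruct (Cplus f finv S Defs.A2 H3) as [[z2 [E2 L2]] _].
  destruct (Cplus f finv S Defs.A3 H0) as [[z3 [E3 L3]] _].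
  simpl in *. specialize (L0 _ E1). specialize (L1 _ E2). specialize (L2 _ E3). specialize (L3 _ E0).
  lra.
Qed.

Lemma cont_refl g : continuity g -> continuity (fun x => - g (- x)).
Proof. intro H.
  assert (Ho : continuity (fun x => - x)).
  { apply (continuity_opp (fun x => x)). apply cont_id. }
  apply (continuity_opp (comp g (fun x => - x))). apply continuity_comp; auto. Qed.

Lemma sys_refl f finv : sys f finv -> sys (fun i x => - f i (- x)) (fun i x => - finv i (- x)).
Proof. intro S. constructor.
  - intros i x y H. simpl. pose proof (s_incr _ _ S i (-y) (-x) ltac:(lra)). lra.
  - intro i. apply cont_refl, (s_cf _ _ S).
  - intro i. apply cont_refl, (s_cfi _ _ S).
  - intros i x. simpl. rewrite Ropp_involutive, (s_inv1 _ _ S). lra.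
  - intros i x. simpl. rewrite Ropp_involutive, (s_inv2 _ _ S). lra.
  - intros i x. simpl. rewrite !Ropp_involutive, (s_rel _ _ S). auto.
Qed.

Lemma unb_below f finv (S : sys f finv) : forall i B, exists x, x < B /\ f i x = x.
Proof. intros i B. destruct (unb_above _ _ (sys_refl f finv S) i (- B)) as [x [H1 H2]].
  exists (- x). split. lra. simpl in H2. lra. Qed.

Lemma sq_fix g z : incr g -> g (g z) = z -> g z = z.
Proof. intros Ib E. destruct (Rtotal_order z (g z)) as [h|[h|h]]; auto.
  - pose proof (Ib _ _ h). lra.
  - pose proof (Ib _ _ h). lra. Qed.

Lemma fix_pres f finv (S : sys f finv) j y : f (next4 j) y = y ->
  f (next4 j) (f j y) = f j y /\ f (next4 j) (finv j y) = finv j y.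
Proof. intro E. split.
  - apply sq_fix. apply (s_incr _ _ S). rewrite <- (s_rel _ _ S), E. auto.
  - apply (incr_inj (f j) (s_incr _ _ S j)). rewrite (s_rel _ _ S), (s_inv1 _ _ S), E. auto.
Qed.

Lemma sandwich g ginv h p : incr g -> continuity g -> continuity ginv ->
  (forall x, g (ginv x) = x) -> (forall x, ginv (g x) = x) -> continuity h ->
  (forall y, h y = y -> h (g y) = g y) -> (forall y, h y = y -> h (ginv y) = ginv y) ->
  h p = p -> p < g p -> (exists q, p < q /\ g q = q) -> (exists q, q < p /\ g q = q) ->
  exists a b, a < p < b /\ g a = a /\ g b = b /\ h a = a /\ h b = b.
Proof.
  intros Ig Cg Cgi G1 G2 Ch Hg Hgi Hp Hgp [q [Hq1 Hq2]] [q' [Hq1' Hq2']].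
  assert (Igi : incr ginv) by exact (incr_inv g ginv Ig G1).
  destruct (lim_up g p q Ig Cg Hgp) as [b [Eb [Pb [_ [_ Hb]]]]].
  { intro n. rewrite <- (itr_fix g q n Hq2). apply incr_le. apply itr_incr; auto. lra. }
  assert (Hgip : ginv p < p) by (pose proof (Igi _ _ Hgp); rewrite G2 in H; auto).
  assert (Hq2i : ginv q' = q') by (rewrite <- Hq2' at 1; auto).
  destruct (lim_down ginv p q' Igi Cgi Hgip) as [a [Ea [Pa [_ [_ Ha]]]]].
  { intro n. rewrite <- (itr_fix ginv q' n Hq2i). apply incr_le. apply itr_incr; auto. lra. }
  exists a, b. split; [lra|]. split; [|split; [|split]].
  - rewrite <- Ea at 1. auto.
  - auto.
  - apply Ha; auto. apply itr_pres; auto.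
  - apply Hb; auto. apply itr_pres; auto.
Qed.

Theorem dyn f finv (S : sys f finv) : (~ exists x, forall i, f i x = x) ->
  exists j a p b, a < p < b /\ f j a = a /\ f j b = b /\
    f (next4 j) a = a /\ f (next4 j) b = b /\ f (next4 j) p = p.
Proof.
  intro Hnf.
  destruct (classic (exists j p, f (next4 j) p = p /\ f j p <> p)) as [[j [p [Hp1 Hp2]]]|Hn].
  - set (n := next4 j) in *.
    assert (Pr := fix_pres f finv S j).
    destruct (unb_above f finv S j p) as [q [Hq1 Hq2]].
    destruct (unb_below f finv S j p) as [q' [Hq1' Hq2']].
    destruct (Rtotal_order p (f j p)) as [h|[h|h]].
    + destruct (sandwich (f j) (finv j) (f n) p (s_incr _ _ S j) (s_cf _ _ S j) (s_cfi _ _ S j)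
        (s_inv1 _ _ S j) (s_inv2 _ _ S j) (s_cf _ _ S n)) as [a [b [H1 [H2 [H3 [H4 H5]]]]]]; auto.
      * intros y Hy; apply (Pr y Hy).
      * intros y Hy; apply (Pr y Hy).
      * eauto.
      * eauto.
      * exists j, a, p, b. destruct H1; repeat split; auto.
    + exfalso; auto.
    + assert (h' : p < finv j p).
      { pose proof (incr_inv _ _ (s_incr _ _ S j) (s_inv1 _ _ S j) _ _ h).
        rewrite (s_inv2 _ _ S) in H. auto. }
      destruct (sandwich (finv j) (f j) (f n) p
        (incr_inv _ _ (s_incr _ _ S j) (s_inv1 _ _ S j)) (s_cfi _ _ S j) (s_cf _ _ S j)
        (s_inv2 _ _ S j) (s_inv1 _ _ S j) (s_cf _ _ S n)) as [a [b [H1 [H2 [H3 [H4 H5]]]]]]; auto.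
      * intros y Hy; apply (Pr y Hy).
      * intros y Hy; apply (Pr y Hy).
      * exists q. split; auto. apply (fixinv f finv S); auto.
      * exists q'. split; auto. apply (fixinv f finv S); auto.
      * exists j, a, p, b. destruct H1; repeat split; auto; apply (fixinv f finv S); auto.
  - exfalso. apply Hnf.
    assert (Sub : forall j p, f (next4 j) p = p -> f j p = p).
    { intros j p Hp. apply NNPP. intro h. apply Hn. eauto. }
    destruct (unb_above f finv S Defs.A0 0) as [x [_ Hx]].
    exists x. pose proof (Sub Defs.A3 x Hx). pose proof (Sub Defs.A2 x H).
    pose proof (Sub Defs.A1 x H0). intro i; destruct i; auto.
Qed.

Lemma cont_path a b : continuity (fun t => (1 - t) * a + t * b).
Proof. apply derivable_continuous. reg. Qed.

Lemma cont_inj_mono g : continuity g -> (forall x y, g x = g y -> x = y) ->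
  incr g \/ (forall x y, x < y -> g y < g x).
Proof.
  intros Cg Ig. destruct (classic (incr g)) as [h|h]; [left; auto|right].
  intros x y Hxy. destruct (Rlt_or_le (g y) (g x)) as [h2|h2]; auto. exfalso.
  assert (h3 : g x < g y) by (destruct h2; auto; apply Ig in H; lra).
  apply h. intros x1 y1 Hxy1.
  destruct (Rlt_or_le (g x1) (g y1)) as [h4|h4]; auto. exfalso.
  assert (h5 : g y1 < g x1) by (destruct h4; auto; apply Ig in H; lra).
  destruct (IVT (fun t => g ((1 - t) * y1 + t * y) - g ((1 - t) * x1 + t * x)) 0 1)
    as [z [[Hz1 Hz2] Hz]].
  - apply (continuity_minus (comp g (fun t => (1 - t) * y1 + t * y))
                            (comp g (fun t => (1 - t) * x1 + t * x)));
    apply continuity_comp; auto; apply cont_path.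
  - lra.
  - replace ((1 - 0) * y1 + 0 * y) with y1 by ring.
    replace ((1 - 0) * x1 + 0 * x) with x1 by ring. lra.
  - replace ((1 - 1) * y1 + 1 * y) with y by ring.
    replace ((1 - 1) * x1 + 1 * x) with x by ring. lra.
  - assert (E : (1 - z) * y1 + z * y = (1 - z) * x1 + z * x) by (apply Ig; lra).
    assert (P1 : 0 <= (1 - z) * (y1 - x1)) by (apply Rmult_le_pos; lra).
    destruct (Rle_lt_or_eq_dec 0 z Hz1) as [hz|hz].
    + assert (P2 : 0 < z * (y - x)) by (apply Rmult_lt_0_compat; lra). nra.
    + subst z. nra.
Qed.

Lemma peq_app_l {G} (rels : word G * word G -> Prop) (u x y : word G) :
  peq rels x y -> peq rels (u ++ x) (u ++ y).
Proof.
  intro H. induction H.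
  - apply peq_refl.
  - apply peq_sym; auto.
  - eapply peq_trans; eauto.
  - rewrite !app_assoc. apply peq_cancel.
  - rewrite (app_assoc u u0 (l ++ v)), (app_assoc u u0 (r ++ v)). apply peq_rel; auto.
Qed.

Lemma peq_app_r {G} (rels : word G * word G -> Prop) (v x y : word G) :
  peq rels x y -> peq rels (x ++ v) (y ++ v).
Proof.
  intro H. induction H.
  - apply peq_refl.
  - apply peq_sym; auto.
  - eapply peq_trans; eauto.
  - rewrite <- !app_assoc. simpl. apply peq_cancel.
  - rewrite <- !app_assoc. apply peq_rel; auto.
Qed.

Lemma peq_app {G} (rels : word G * word G -> Prop) (x x' y y' : word G) :
  peq rels x x' -> peq rels y y' -> peq rels (x ++ y) (x' ++ y').
Proof. intros H1 H2. eapply peq_trans. apply peq_app_r; eauto. apply peq_app_l; auto. Qed.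

Lemma peq_cancel0 {G} (rels : word G * word G -> Prop) g b (v : word G) :
  peq rels ((g, b) :: (g, negb b) :: v) v.
Proof. apply (peq_cancel rels [] v g b). Qed.

Lemma winv_app {G} (x y : word G) : winv (x ++ y) = winv y ++ winv x.
Proof. unfold winv. rewrite map_app, rev_app_distr. auto. Qed.

Lemma winv_invol {G} (x : word G) : winv (winv x) = x.
Proof. unfold winv. rewrite map_rev, rev_involutive, map_map.
  induction x as [|[g b] x IH]; simpl; auto. rewrite Bool.negb_involutive. f_equal. exact IH. Qed.

Lemma peq_winv_r {G} (rels : word G * word G -> Prop) (w : word G) :
  peq rels (w ++ winv w) [].
Proof.
  induction w as [|[g b] w IH]; simpl. apply peq_refl.
  change (winv ((g, b) :: w)) with (winv ([(g,b)] ++ w)). rewrite winv_app.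
  rewrite app_assoc.
  eapply peq_trans. apply (peq_app_l rels [(g,b)]). apply (peq_app_r rels). exact IH.
  simpl. apply peq_cancel0.
Qed.

Lemma peq_winv_l {G} (rels : word G * word G -> Prop) (w : word G) :
  peq rels (winv w ++ w) [].
Proof. rewrite <- (winv_invol w) at 2. apply peq_winv_r. Qed.

Lemma peq_div {G} (rels : word G * word G -> Prop) (x y : word G) :
  peq rels (x ++ winv y) [] -> peq rels x y.
Proof.
  intro H. apply peq_trans with (x ++ (winv y ++ y)).
  - rewrite <- (app_nil_r x) at 1. apply peq_app_l. apply peq_sym, peq_winv_l.
  - rewrite app_assoc. apply peq_trans with ([] ++ y). apply peq_app_r; auto. apply peq_refl.
Qed.

Lemma weval_app {G} (f finv : G -> R -> R) (x y : word G) z :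
  weval f finv (x ++ y) z = weval f finv x (weval f finv y z).
Proof. induction x as [|[g b] x IH]; simpl; auto. rewrite IH. auto. Qed.

Lemma peq_sound {G} (rels : word G * word G -> Prop) (f finv : G -> R -> R) :
  (forall g z, f g (finv g z) = z) -> (forall g z, finv g (f g z) = z) ->
  (forall l r, rels (l, r) -> forall z, weval f finv l z = weval f finv r z) ->
  forall w1 w2, peq rels w1 w2 -> forall z, weval f finv w1 z = weval f finv w2 z.
Proof.
  intros I1 I2 Hr w1 w2 H. induction H; intro z.
  - auto.
  - auto.
  - rewrite IHpeq1; auto.
  - rewrite !weval_app. simpl. destruct b; simpl; rewrite ?I1, ?I2; auto.
  - rewrite !weval_app. rewrite (Hr l r H). auto.
Qed.

Definition la : bsgen * bool := (Alpha, false).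
Definition lA : bsgen * bool := (Alpha, true).
Definition lb : bsgen * bool := (Beta, false).
Definition lB : bsgen * bool := (Beta, true).

Definition zpow (g : bsgen) (m : Z) : word bsgen :=
  if Z.leb 0 m then repeat (g, false) (Z.to_nat m) else repeat (g, true) (Z.to_nat (- m)).

Lemma zpow_pos g m : (0 <= m)%Z -> zpow g m = repeat (g, false) (Z.to_nat m).
Proof. intro H. unfold zpow. destruct (Z.leb_spec 0 m); auto. lia. Qed.

Lemma zpow_neg g m : (m <= 0)%Z -> zpow g m = repeat (g, true) (Z.to_nat (- m)).
Proof. intro H. unfold zpow. destruct (Z.leb_spec 0 m); auto.
  assert (m = 0%Z) by lia. subst. reflexivity. Qed.

Notation bq := (peq bs_rel).

Lemma zpow_succ g m : bq ((g, false) :: zpow g m) (zpow g (m + 1)).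
Proof.
  destruct (Z.le_gt_cases 0 m).
  - rewrite !zpow_pos by lia. replace (Z.to_nat (m + 1)) with (S (Z.to_nat m)) by lia.
    apply peq_refl.
  - rewrite !zpow_neg by lia. replace (Z.to_nat (- m)) with (S (Z.to_nat (- (m + 1)))) by lia.
    simpl. apply (peq_cancel0 bs_rel g false).
Qed.

Lemma zpow_pred g m : bq ((g, true) :: zpow g m) (zpow g (m - 1)).
Proof.
  destruct (Z.le_gt_cases m 0).
  - rewrite !zpow_neg by lia. replace (Z.to_nat (- (m - 1))) with (S (Z.to_nat (- m))) by lia.
    apply peq_refl.
  - rewrite !zpow_pos by lia. replace (Z.to_nat m) with (S (Z.to_nat (m - 1))) by lia.
    simpl. apply (peq_cancel0 bs_rel g true).
Qed.

Lemma rep_pos_app g k n : bq (repeat (g, false) k ++ zpow g n) (zpow g (Z.of_nat k + n)).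
Proof.
  revert n. induction k; intro n; simpl. apply peq_refl.
  eapply peq_trans. apply (peq_app_l bs_rel [(g,false)]). apply IHk.
  simpl. eapply peq_trans. apply zpow_succ. replace (Z.of_nat k + n + 1)%Z with (Z.pos (Pos.of_succ_nat k) + n)%Z by lia.
  apply peq_refl.
Qed.

Lemma rep_neg_app g k n : bq (repeat (g, true) k ++ zpow g n) (zpow g (- Z.of_nat k + n)).
Proof.
  revert n. induction k; intro n; simpl. apply peq_refl.
  eapply peq_trans. apply (peq_app_l bs_rel [(g,true)]). apply IHk.
  simpl. eapply peq_trans. apply zpow_pred. replace (- Z.of_nat k + n - 1)%Z with (Z.neg (Pos.of_succ_nat k) + n)%Z by lia.
  apply peq_refl.
Qed.

Lemma zpow_add g m n : bq (zpow g m ++ zpow g n) (zpow g (m + n)).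
Proof.
  destruct (Z.le_gt_cases 0 m).
  - rewrite (zpow_pos g m) by lia. eapply peq_trans. apply rep_pos_app.
    replace (Z.of_nat (Z.to_nat m) + n)%Z with (m + n)%Z by lia. apply peq_refl.
  - rewrite (zpow_neg g m) by lia. eapply peq_trans. apply rep_neg_app.
    replace (- Z.of_nat (Z.to_nat (- m)) + n)%Z with (m + n)%Z by lia. apply peq_refl.
Qed.

Lemma zpow_0 g : zpow g 0 = [].
Proof. reflexivity. Qed.

Lemma rel_ab : bq [la; lb] [lb; lb; la].
Proof.
  apply peq_trans with [la; lb; lA; la].
  - apply peq_sym. apply (peq_cancel bs_rel [la; lb] [] Alpha true).
  - apply (peq_rel bs_rel [] [la] [la; lb; lA] [lb; lb]). reflexivity.
Qed.

Lemma rel_aB : bq [la; lB] [lB; lB; la].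
Proof.
  apply peq_sym.
  apply peq_trans with [lB; lB; la; lb; lB].
  { apply peq_sym. apply (peq_cancel bs_rel [lB; lB; la] [] Beta false). }
  apply peq_trans with ([lB; lB] ++ [lb; lb; la] ++ [lB]).
  { apply (peq_app_l bs_rel [lB; lB] ([la; lb] ++ [lB])). apply peq_app_r. apply rel_ab. }
  simpl. apply peq_trans with [lB; lb; la; lB].
  { apply (peq_cancel bs_rel [lB] [lb; la; lB] Beta true). }
  apply (peq_cancel0 bs_rel Beta true).
Qed.

Lemma a_rep g b k : bq [la; (g, b)] [(g, b); (g, b); la] ->
  bq (la :: repeat (g, b) k) (repeat (g, b) (2 * k) ++ [la]).
Proof.
  intro R0. induction k; simpl. apply peq_refl.
  apply peq_trans with ([(g,b); (g,b); la] ++ repeat (g, b) k).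
  { apply (peq_app_r bs_rel (repeat (g,b) k) [la; (g,b)]). exact R0. }
  replace (k + S (k + 0))%nat with (S (2 * k)) by lia. simpl.
  apply (peq_app_l bs_rel [(g,b); (g,b)]). exact IHk.
Qed.

Lemma a_zpow m : bq (la :: zpow Beta m) (zpow Beta (2 * m) ++ [la]).
Proof.
  destruct (Z.le_gt_cases 0 m).
  - rewrite !zpow_pos by lia. replace (Z.to_nat (2 * m)) with (2 * Z.to_nat m)%nat by lia.
    apply a_rep. apply rel_ab.
  - rewrite !zpow_neg by lia. replace (Z.to_nat (- (2 * m))) with (2 * Z.to_nat (- m))%nat by lia.
    apply a_rep. apply rel_aB.
Qed.

Lemma zpow_A m : bq (zpow Beta m ++ [lA]) (lA :: zpow Beta (2 * m)).
Proof.
  apply peq_trans with ([lA] ++ (la :: zpow Beta m) ++ [lA]).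
  { apply peq_sym. apply (peq_cancel0 bs_rel Alpha true). }
  apply peq_trans with ([lA] ++ (zpow Beta (2 * m) ++ [la]) ++ [lA]).
  { apply peq_app_l, peq_app_r, a_zpow. }
  rewrite <- app_assoc. simpl.
  rewrite <- (app_nil_r (zpow Beta (2 * m))) at 2.
  apply (peq_app_l bs_rel [lA]). apply (peq_cancel bs_rel _ [] Alpha false).
Qed.

Fixpoint pow2 (i : nat) : Z := match i with O => 1%Z | S i => (2 * pow2 i)%Z end.

Lemma zpow_Arep i : forall m, bq (zpow Beta m ++ repeat lA i) (repeat lA i ++ zpow Beta (m * pow2 i)).
Proof.
  induction i; intro m; cbn [repeat pow2].
  - rewrite app_nil_r, Z.mul_1_r. apply peq_refl.
  - change (lA :: repeat lA i) with ([lA] ++ repeat lA i). rewrite app_assoc.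
    eapply peq_trans. apply peq_app_r. apply zpow_A.
    cbn [app]. apply (peq_app_l bs_rel [lA]). eapply peq_trans. apply IHi.
    replace (2 * m * pow2 i)%Z with (m * (2 * pow2 i))%Z by ring. apply peq_refl.
Qed.

Definition NF (i : nat) (m : Z) (j : nat) : word bsgen :=
  repeat lA i ++ zpow Beta m ++ repeat la j.

Lemma b_NF (c : Z) i m j : bq (zpow Beta c ++ NF i m j) (NF i (c * pow2 i + m) j).
Proof.
  unfold NF. rewrite app_assoc.
  eapply peq_trans. apply peq_app_r. apply zpow_Arep.
  rewrite <- !app_assoc. apply peq_app_l. rewrite app_assoc. apply peq_app_r. apply zpow_add.
Qed.

Lemma nf_exists w : exists i m j, bq w (NF i m j).
Proof.
  induction w as [|[g b] w [i [m [j IH]]]].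
  - exists O, 0%Z, O. apply peq_refl.
  - assert (H1 : bq ((g, b) :: w) ((g, b) :: NF i m j)) by (apply (peq_app_l bs_rel [(g,b)]); auto).
    destruct g, b.
    + exists (S i), m, j. exact H1.
    + destruct i as [|i].
      * exists O, (2 * m)%Z, (S j). eapply peq_trans. exact H1. unfold NF. simpl.
        apply peq_trans with ((zpow Beta (2*m) ++ [la]) ++ repeat la j).
        apply (peq_app_r bs_rel (repeat la j) (la :: zpow Beta m)). apply a_zpow.
        rewrite <- app_assoc. apply peq_refl.
      * exists i, m, j. eapply peq_trans. exact H1. unfold NF. simpl. apply (peq_cancel0 bs_rel Alpha false).
    + exists i, (-1 * pow2 i + m)%Z, j. eapply peq_trans. exact H1. apply (b_NF (-1)).
    + exists i, (1 * pow2 i + m)%Z, j. eapply peq_trans. exact H1. apply (b_NF 1).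
Qed.

Lemma weval_rep_f {G} (f finv : G -> R -> R) g k z :
  weval f finv (repeat (g, false) k) z = itr (f g) k z.
Proof. induction k; simpl; auto. rewrite IHk; auto. Qed.

Lemma weval_rep_t {G} (f finv : G -> R -> R) g k z :
  weval f finv (repeat (g, true) k) z = itr (finv g) k z.
Proof. induction k; simpl; auto. rewrite IHk; auto. Qed.

Lemma pow_nontriv g z n : incr g -> g z <> z -> (n >= 1)%nat -> itr g n z <> z.
Proof.
  intros Ig Hz Hn. replace n with (S (n - 1) + 0)%nat by lia.
  destruct (Rtotal_order z (g z)) as [h|[h|h]].
  - pose proof (itr_up_mono g z Ig h 0 (n - 1)). simpl in H. simpl. lra.
  - exfalso; auto.
  - pose proof (itr_down_mono g z Ig h 0 (n - 1)). simpl in H. simpl. lra.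
Qed.

Lemma zpow_nontriv (fa fainv : bsgen -> R -> R) g m : incr (fa g) ->
  (forall y, fa g (fainv g y) = y) -> (exists z, fa g z <> z) ->
  (forall z, weval fa fainv (zpow g m) z = z) -> m = 0%Z.
Proof.
  intros Ig Inv [z0 Hz0] H. specialize (H z0).
  destruct (Z.lt_trichotomy m 0) as [h|[h|h]]; auto; exfalso.
  - rewrite zpow_neg in H by lia. rewrite weval_rep_t in H.
    refine (pow_nontriv (fainv g) z0 _ (incr_inv _ _ Ig Inv) _ _ H); [|lia].
    intro E. apply Hz0. rewrite <- E at 1. auto.
  - rewrite zpow_pos in H by lia. rewrite weval_rep_f in H.
    refine (pow_nontriv (fa g) z0 _ Ig Hz0 _ H). lia.
Qed.

Lemma rep_lA i : repeat lA i = zpow Alpha (- Z.of_nat i).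
Proof. rewrite zpow_neg by lia. f_equal. lia. Qed.

Lemma rep_la i : repeat la i = zpow Alpha (Z.of_nat i).
Proof. rewrite zpow_pos by lia. f_equal. lia. Qed.

Lemma faithful (fa fainv : bsgen -> R -> R) :
  incr (fa Alpha) -> incr (fa Beta) ->
  (forall g y, fa g (fainv g y) = y) -> (forall g y, fainv g (fa g y) = y) ->
  (forall y, fa Alpha (fa Beta (fainv Alpha y)) = fa Beta (fa Beta y)) ->
  (exists z, fa Alpha z <> z) -> (exists z, fa Beta z <> z) ->
  forall w, (forall z, weval fa fainv w z = z) -> bq w [].
Proof.
  intros IA IB I1 I2 Rel NA NB w Hw.
  set (W := weval fa fainv) in *.
  assert (Snd : forall w1 w2, bq w1 w2 -> forall z, W w1 z = W w2 z).
  { apply peq_sound; auto. intros l r H z. unfold bs_rel in H. inversion H; subst. simpl. auto. }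
  assert (Fadd : forall g m n z, W (zpow g m) (W (zpow g n) z) = W (zpow g (m + n)) z).
  { intros. rewrite <- (Snd _ _ (zpow_add g m n)). unfold W. rewrite weval_app. auto. }
  assert (F0 : forall g z, W (zpow g 0) z = z) by reflexivity.
  destruct (nf_exists w) as [i [m [j Hnf]]].
  assert (HN : forall z, W (zpow Alpha (- Z.of_nat i)) (W (zpow Beta m) (W (zpow Alpha (Z.of_nat j)) z)) = z).
  { intro z. rewrite <- (Hw z) at 2. rewrite (Snd _ _ Hnf). unfold NF. rewrite rep_lA, rep_la.
    unfold W. rewrite !weval_app. auto. }
  set (k := (Z.of_nat i - Z.of_nat j)%Z).
  assert (BA : forall y, W (zpow Beta m) y = W (zpow Alpha k) y).
  { intro y. specialize (HN (W (zpow Alpha (- Z.of_nat j)) y)).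
    rewrite Fadd in HN. replace (Z.of_nat j + - Z.of_nat j)%Z with 0%Z in HN by lia.
    rewrite F0 in HN.
    transitivity (W (zpow Alpha (Z.of_nat i)) (W (zpow Alpha (- Z.of_nat i)) (W (zpow Beta m) y))).
    { rewrite Fadd. replace (Z.of_nat i + - Z.of_nat i)%Z with 0%Z by lia. rewrite F0; auto. }
    rewrite HN, Fadd; unfold k; try (f_equal; f_equal; lia). }
  assert (A1e : forall z, fa Alpha z = W (zpow Alpha 1) z) by reflexivity.
  assert (Com : forall z, fa Alpha (W (zpow Alpha k) z) = W (zpow Alpha k) (fa Alpha z)).
  { intro z. rewrite !A1e, !Fadd; try (f_equal; f_equal; lia). }
  assert (Z2 : forall z, fa Alpha (W (zpow Beta m) z) = W (zpow Beta (2 * m)) (fa Alpha z)).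
  { intro z. pose proof (Snd _ _ (a_zpow m) z). unfold W in *. rewrite weval_app in H. simpl in H. exact H. }
  assert (B2 : forall y, W (zpow Beta (2 * m)) y = W (zpow Beta m) y).
  { intro y. rewrite <- (I1 Alpha y). rewrite <- Z2, BA, Com, BA. auto. }
  assert (B1 : forall y, W (zpow Beta m) y = y).
  { intro y. transitivity (W (zpow Beta (- m)) (W (zpow Beta (2 * m)) y)).
    { rewrite Fadd. f_equal. f_equal. lia. }
    rewrite B2, Fadd. replace (- m + m)%Z with 0%Z by lia. apply F0. }
  assert (Hm : m = 0%Z) by (apply (zpow_nontriv fa fainv Beta m); auto).
  assert (Hk : k = 0%Z).
  { apply (zpow_nontriv fa fainv Alpha k); auto. intro z. rewrite <- BA. subst m. reflexivity. }
  assert (Hij : i = j) by (unfold k in Hk; lia). subst m j.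
  eapply peq_trans. exact Hnf. unfold NF. rewrite zpow_0. simpl.
  rewrite rep_lA, rep_la. eapply peq_trans. apply zpow_add.
  replace (- Z.of_nat i + Z.of_nat i)%Z with 0%Z by lia. apply peq_refl.
Qed.

Definition phi (j n : gen4) (p : bsgen * bool) : gen4 * bool :=
  (match fst p with Alpha => j | Beta => n end, snd p).

Lemma bs_subst_eq j n w : bs_subst [(j, false)] [(n, false)] w = map (phi j n) w.
Proof. induction w as [|[g b] w IH]; simpl; auto. destruct g, b; simpl; rewrite IH; auto. Qed.

Definition fa_of (f : gen4 -> R -> R) j n (g : bsgen) : R -> R :=
  match g with Alpha => f j | Beta => f n end.

Lemma weval_map f finv j n w z :
  weval f finv (map (phi j n) w) z = weval (fa_of f j n) (fa_of finv j n) w z.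
Proof. induction w as [|[g b] w IH]; simpl; auto. rewrite IH. destruct g, b; auto. Qed.

Lemma peq_map j w1 w2 : bq w1 w2 ->
  peq higman_rel (map (phi j (next4 j)) w1) (map (phi j (next4 j)) w2).
Proof.
  intro H. induction H.
  - apply peq_refl.
  - apply peq_sym; auto.
  - eapply peq_trans; eauto.
  - rewrite !map_app. simpl. apply peq_cancel.
  - unfold bs_rel in H. inversion H; subst. rewrite !map_app. simpl.
    apply (peq_rel higman_rel _ _ [(j, false); (next4 j, false); (j, true)]
      [(next4 j, false); (next4 j, false)]). exists j. reflexivity.
Qed.

Lemma no_dec (a ainv c : R -> R) : continuity a -> (forall x, a (ainv x) = x) ->
  (forall x, ainv (a x) = x) -> (forall x y, x < y -> c y < c x) ->
  (forall x, a (c (ainv x)) = c (c x)) -> False.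
Proof.
  intros Ca I1 I2 Dc Rel.
  assert (Inj : forall x y, a x = a y -> x = y).
  { intros x y E. rewrite <- (I2 x), <- (I2 y), E. auto. }
  assert (Hcc : c (c 0) < c (c 1)) by (apply Dc, Dc; lra).
  rewrite <- !Rel in Hcc.
  destruct (cont_inj_mono a Ca Inj) as [Ia|Da].
  - assert (Iai := incr_inv a ainv Ia I1).
    pose proof (Ia _ _ (Dc _ _ (Iai 0 1 ltac:(lra)))). lra.
  - assert (Dai : forall x y, x < y -> ainv y < ainv x).
    { intros x y Hxy. destruct (Rtotal_order (ainv y) (ainv x)) as [h|[h|h]]; auto.
      - apply (f_equal a) in h. rewrite !I1 in h. lra.
      - apply Da in h. rewrite !I1 in h. lra. }
    pose proof (Da _ _ (Dc _ _ (Dai 0 1 ltac:(lra)))). lra.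
Qed.

Definition prev4 (i : gen4) : gen4 :=
  match i with Defs.A0 => Defs.A3 | Defs.A1 => Defs.A0 | Defs.A2 => Defs.A1 | Defs.A3 => Defs.A2 end.

Lemma next_prev i : next4 (prev4 i) = i.
Proof. destruct i; reflexivity. Qed.

Lemma all_fixed (f finv : gen4 -> R -> R) x : (forall i, finv i (f i x) = x) -> (forall i, f i x = x) ->
  forall w, weval f finv w x = x.
Proof.
  intros I2 H w. induction w as [|[g b] w IH]; simpl; auto. rewrite IH.
  destruct b; auto. rewrite <- (H g) at 1. auto.
Qed.

Theorem lemma5p2
  (f finv : gen4 -> R -> R)
  (Hhomeo : forall i, is_homeo_pair (f i) (finv i))
  (Hhom : forall l r, higman_rel (l, r) ->
            forall x, weval f finv l x = weval f finv r x)
  (Hnontriv : exists (w : word gen4) (x : R), weval f finv w x <> x)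
  (Hnofix : ~ (exists x : R, forall w : word gen4, weval f finv w x = x)) :
  exists u v : word gen4,
    (* alpha |-> u, beta |-> v defines a homomorphism phi : BS(1,2) -> H *)
    peq higman_rel (u ++ v ++ winv u) (v ++ v) /\
    (* phi is injective, so B := phi(BS(1,2)) is isomorphic to BS(1,2) *)
    (forall w1 w2 : word bsgen,
        peq higman_rel (bs_subst u v w1) (bs_subst u v w2) -> peq bs_rel w1 w2) /\
    (* psi restricted to B is injective *)
    (forall w1 w2 : word bsgen,
        (forall x, weval f finv (bs_subst u v w1) x = weval f finv (bs_subst u v w2) x) ->
        peq higman_rel (bs_subst u v w1) (bs_subst u v w2)) /\
    (* psi(B) preserves a compact interval I = [a,b] and its action on I
       is not semi-conjugate to the standard affine action *)
    exists a b : R, a < b /\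
      (forall (w : word bsgen) x, a <= x <= b ->
          a <= weval f finv (bs_subst u v w) x <= b) /\
      ~ semiconj_to_std a b (fun w => weval f finv (bs_subst u v w)).
Proof.
  assert (Cf : forall i, continuity (f i)) by (intro i; apply (Hhomeo i)).
  assert (Cfi : forall i, continuity (finv i)) by (intro i; apply (Hhomeo i)).
  assert (I1 : forall i x, f i (finv i x) = x) by (intro i; apply (Hhomeo i)).
  assert (I2 : forall i x, finv i (f i x) = x) by (intro i; apply (Hhomeo i)).
  assert (Rel : forall i x, f i (f (next4 i) (finv i x)) = f (next4 i) (f (next4 i) x)).
  { intros i x. exact (Hhom _ _ (ex_intro _ i eq_refl) x). }
  assert (Inc : forall i, incr (f i)).
  { intro i. assert (Inj : forall x y, f i x = f i y -> x = y).
    { intros x y E. rewrite <- (I2 i x), <- (I2 i y), E. auto. }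
    destruct (cont_inj_mono (f i) (Cf i) Inj) as [h|h]; auto. exfalso.
    apply (no_dec (f (prev4 i)) (finv (prev4 i)) (f i) (Cf _) (I1 _) (I2 _) h).
    intro x. pose proof (Rel (prev4 i) x). rewrite next_prev in H. exact H. }
  assert (S : sys f finv).
  { constructor; auto. intros i x. rewrite <- (Rel i (f i x)), I2. auto. }
  assert (Triv : forall k, (forall z, f k z = z) -> forall z, f (next4 k) z = z).
  { intros k Hk z. pose proof (Rel k z). rewrite Hk in H.
    assert (finv k z = z) by (rewrite <- (Hk z) at 1; auto). rewrite H0 in H.
    symmetry. apply (incr_inj _ (Inc (next4 k))). auto. }
  assert (NT : forall k, exists z, f k z <> z).
  { intro k. apply NNPP. intro Hn.
    assert (Hk : forall z, f k z = z).
    { intro z. apply NNPP. intro h. apply Hn. eauto. }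
    pose proof (Triv _ Hk). pose proof (Triv _ H). pose proof (Triv _ H0).
    assert (All : forall i z, f i z = z) by (destruct k, i; simpl in *; auto).
    destruct Hnontriv as [w [x Hx]]. apply Hx. apply all_fixed; auto. }
  assert (NF' : ~ exists x, forall i, f i x = x).
  { intros [x Hx]. apply Hnofix. exists x. apply all_fixed; auto. }
  destruct (dyn f finv S NF') as [j [a [p [b [Hapb [Fa [Fb [Ga [Gb Gp]]]]]]]]].
  set (n := next4 j) in *.
  set (fa := fa_of f j n). set (fainv := fa_of finv j n).
  assert (Fa1 : forall g y, fa g (fainv g y) = y) by (intros [|] y; simpl; auto).
  assert (Fa2 : forall g y, fainv g (fa g y) = y) by (intros [|] y; simpl; auto).
  assert (Faith := faithful fa fainv (Inc j) (Inc n) Fa1 Fa2 (Rel j) (NT j) (NT n)).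
  assert (SndH : forall w1 w2, peq higman_rel w1 w2 -> forall z, weval f finv w1 z = weval f finv w2 z).
  { apply peq_sound; auto. }
  assert (SndB : forall w1 w2, bq w1 w2 -> forall z, weval fa fainv w1 z = weval fa fainv w2 z).
  { apply peq_sound; auto. intros l r H z. unfold bs_rel in H. inversion H; subst. simpl. apply (Rel j). }
  assert (Key : forall w1 w2, (forall z, weval fa fainv w1 z = weval fa fainv w2 z) -> bq w1 w2).
  { intros w1 w2 H. apply peq_div. apply Faith. intro z. rewrite weval_app, H, <- weval_app.
    rewrite (SndB _ _ (peq_winv_r bs_rel w2)). auto. }
  exists [(j, false)], [(n, false)]. split; [|split; [|split]].
  - pose proof (peq_rel higman_rel [] [] [(j, false); (n, false); (j, true)] [(n, false); (n, false)]
      (ex_intro _ j eq_refl)). simpl in *. exact H.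
  - intros w1 w2 H. rewrite !bs_subst_eq in H. apply Key. intro z.
    unfold fa, fainv. rewrite <- !weval_map. apply SndH; auto.
  - intros w1 w2 H. rewrite !bs_subst_eq in *. apply peq_map. apply Key. intro z.
    unfold fa, fainv. rewrite <- !weval_map. apply H.
  - exists a, b. split; [lra|split].
    + intros w x Hx. rewrite bs_subst_eq, weval_map.
      induction w as [|[g c] w IH]; simpl; auto.
      assert (L : forall h : R -> R, incr h -> h a = a -> h b = b -> forall y, a <= y <= b -> a <= h y <= b).
      { intros h Ih Ha Hb y Hy. rewrite <- Ha, <- Hb at 1. split; apply incr_le; auto; lra. }
      assert (Ij := incr_inv _ _ (Inc j) (I1 j)). assert (In' := incr_inv _ _ (Inc n) (I1 n)).
      assert (Fai : forall y, f j y = y -> finv j y = y) by (intros y Hy; apply (fixinv f finv S); auto).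
      assert (Gai : forall y, f n y = y -> finv n y = y) by (intros y Hy; apply (fixinv f finv S); auto).
      destruct g, c; simpl; apply L; auto.
    + intros [h [Hp [Hm Heq]]]. specialize (Heq [(Beta, false)] p ltac:(lra)).
      simpl in Heq. rewrite Gp in Heq. lra.
Qed.
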